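(* In the continuous Donation Game, let $\chi>1$ and $\kappa\in\mathbb{R}$. Suppose there exist a bounded measurable $\psi:[0,K]\to\mathbb{R}$, a probability measure $\sigma_X^0$ on $[0,K]$ and a Markov kernel $\sigma_X[x,y]$ from $[0,K]^2$ to $[0,K]$ such that for all $x,y\in[0,K]$, $$\big(u_X(x,y)-\kappa\big)-\chi\big(u_Y(x,y)-\kappa\big)=\psi(x)-\lambda\int\psi(s)\,d\sigma_X[x,y](s)-(1-\lambda)\int\psi(s)\,d\sigma_X^0(s).$$ Then $0\le\kappa\le b(K)-c(K)$.
   Context: Continuous Donation Game: fix $K>0$ and measurable nondecreasing functions $b,c:[0,K]\to\mathbb{R}$ with $b(0)=c(0)=0$ and $b(s)>c(s)$ for $s>0$. Action spaces $S_X=S_Y=[0,K]$, payoffs $u_X(x,y)=b(y)-c(x)$, $u_Y(x,y)=b(x)-c(y)$, discount factor $\lambda\in(0,1)$. *)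

(* Defs.v *)
From HB Require Import structures.
From mathcomp Require Import all_boot all_order all_algebra.
From mathcomp Require Import all_classical all_reals all_analysis.
Set Implicit Arguments. Unset Strict Implicit. Unset Printing Implicit Defensive.
Import Order.TTheory GRing.Theory Num.Theory.
Local Open Scope classical_set_scope.
Local Open Scope ring_scope.

Definition donation_game {R : realType} (K : R) (b c : R -> R) : Prop :=
  0 < K /\
  measurable_fun `[0, K]%classic b /\ measurable_fun `[0, K]%classic c /\
  (forall s t : R, 0 <= s -> s <= t -> t <= K -> b s <= b t) /\
  (forall s t : R, 0 <= s -> s <= t -> t <= K -> c s <= c t) /\
  b 0 = 0 /\ c 0 = 0 /\
  (forall s : R, 0 < s -> s <= K -> c s < b s).

Definition uX {R : realType} (b c : R -> R) (x y : R) : R := b y - c x.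
Definition uY {R : realType} (b c : R -> R) (x y : R) : R := b x - c y.

(* Main.v *)
Require Import Defs.
From HB Require Import structures.
From mathcomp Require Import all_boot all_order all_algebra all_classical all_reals all_analysis.
From mathcomp Require Import lra.
Import Order.TTheory GRing.Theory Num.Theory.
Local Open Scope classical_set_scope.
Local Open Scope ring_scope.

Lemma int_bounds (R : realType) (mu : measure R R) (K a B : R) (psi : R -> R) :
  mu `[0, K]%classic = 1%E ->
  measurable_fun `[0, K]%classic psi ->
  (forall s, `[0, K]%classic s -> a <= psi s <= B) ->
  (a%:E <= \int[mu]_(s in `[0%R, K]%classic) (psi s)%:E <= B%:E)%E.
Proof.
move=> h1 hm hb.
have mD : measurable (`[0, K]%classic : set R) by [].
have fin : (mu `[0%R, K]%classic < +oo)%E by rewrite h1 ltry.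
have bd : [bounded psi x | x in `[0, K]%classic].
  rewrite /bounded_near; near=> M => x Ax /=.
  have /andP[h h'] := hb x Ax.
  apply: (@le_trans _ _ (`|a| + `|B|)).
    have := ler_norm a; have := ler_norm (-a); have := ler_norm B; have := ler_norm (-B).
    rewrite !normrN ler_norml => *; apply/andP; split; lra.
  near: M; apply: nbhs_pinfty_ge; rewrite realE addr_ge0 //.
have ip : mu.-integrable `[0, K]%classic (EFin \o psi).
  exact: measurable_bounded_integrable.
have ic : forall k : R, mu.-integrable `[0, K]%classic (EFin \o cst k).
  move=> k; apply: (measurable_bounded_integrable mD fin) => //.
  exact: bounded_cst.
have ca : forall k, (\int[mu]_(x in `[0%R, K]%classic) (EFin \o cst k) x = k%:E)%E.
  by move=> k; have := integral_cst mu mD k%:E; rewrite h1 mule1.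
apply/andP; split.
- have := @le_integral _ _ _ mu _ mD (EFin \o cst a) (EFin \o psi) (ic a) ip.
  rewrite ca; apply.
  by move=> x /set_mem Ax /=; rewrite lee_fin; have /andP[] := hb x Ax.
- have := @le_integral _ _ _ mu _ mD (EFin \o psi) (EFin \o cst B) ip (ic B).
  rewrite ca; apply.
  by move=> x /set_mem Ax /=; rewrite lee_fin; have /andP[] := hb x Ax.
Unshelve. all: by end_near.
Qed.

Theorem mainTheorem13 (R : realType) (K : R) (b c : R -> R) (lambda chi kappa : R)
  (hgame : donation_game K b c)
  (hlam : 0 < lambda < 1) (hchi : 1 < chi)
  (psi : R -> R)
  (psi_meas : measurable_fun `[0, K]%classic psi)
  (psi_bdd : exists M : R, forall s, 0 <= s <= K -> `|psi s| <= M)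
  (sigma0 : probability R R)
  (sigma0_supp : sigma0 `[0, K]%classic = 1%E)
  (sigma : R.-pker (R * R)%type ~> R)
  (sigma_supp : forall x y : R, 0 <= x <= K -> 0 <= y <= K ->
      sigma (x, y) `[0, K]%classic = 1%E)
  (heq : forall x y : R, 0 <= x <= K -> 0 <= y <= K ->
      ((uX b c x y - kappa) - chi * (uY b c x y - kappa))%:E =
      ((psi x)%:E
       - lambda%:E * (\int[sigma (x, y)]_(s in `[0%R, K]%classic) (psi s)%:E)
       - (1 - lambda)%:E * (\int[sigma0]_(s in `[0%R, K]%classic) (psi s)%:E))%E) :
  0 <= kappa <= b K - c K.
Proof.
case: hgame => K0 [_ [_ [bmon [cmon [b0 [c0 _]]]]]].
have itvP : forall s : R, `[0%R, K]%classic s <-> 0 <= s <= K.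
  by move=> s; rewrite /= in_itv.
case: psi_bdd => M hM.
set A := psi @` `[0%R, K]%classic.
have A0 : A !=set0 by exists (psi 0), 0 => //; apply/itvP; rewrite lexx ltW.
have hsA : has_sup A.
  split => //; exists M => _ [s /itvP hs <-]; have := hM s hs.
  by rewrite ler_norml => /andP[].
have hi : has_inf A.
  split => //; exists (- M) => _ [s /itvP hs <-]; have := hM s hs.
  by rewrite ler_norml => /andP[].
have bnd : forall s, `[0%R, K]%classic s -> inf A <= psi s <= sup A.
  move=> s hsK; apply/andP; split.
    by apply: ge_inf; [case: hi | exists s].
  by apply: sup_upper_bound => //; exists s.
have finE : forall (e : \bar R) (a B' : R), (a%:E <= e <= B'%:E)%E ->
    exists r : R, e = r%:E /\ a <= r <= B'.
  move=> [r| |] a B' /andP[h1 h2] //; by exists r; rewrite -!lee_fin h1 h2.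
have [r0 [er0 hr0]] := finE _ _ _ (@int_bounds _ sigma0 _ _ _ _ sigma0_supp psi_meas bnd).
pose f x y := (uX b c x y - kappa) - chi * (uY b c x y - kappa).
have key : forall x y, 0 <= x <= K -> 0 <= y <= K ->
    psi x - sup A <= f x y <= psi x - inf A.
  move=> x y hx hy.
  have [r [er hr]] := finE _ _ _ (@int_bounds _ (sigma (x, y)) _ _ _ _ (sigma_supp _ _ hx hy) psi_meas bnd).
  have := heq _ _ hx hy; rewrite er er0 -!EFinM -!EFinB => -[fe]; rewrite /f fe.
  case/andP: hr => ??; case/andP: hr0 => ??; case/andP: hlam => ??.
  apply/andP; split; nra.
have bge0 : forall x, 0 <= x <= K -> 0 <= b x /\ 0 <= c x.
  move=> x /andP[x0 xK]; split.
    by rewrite -b0; apply: bmon; rewrite ?lexx.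
  by rewrite -c0; apply: cmon; rewrite ?lexx.
apply/andP; split.
- rewrite leNgt; apply/negP => kneg.
  have eps0 : 0 < (1 - chi) * kappa by nra.
  have [_ [s /itvP hsK <-] hs'] := sup_adherent eps0 hsA.
  have /andP[k1 _] := key s 0 hsK (ltac:(rewrite lexx ltW //)).
  have [bs cs] := bge0 s hsK.
  move: k1; rewrite /f /uX /uY b0 c0 => k1.
  have : 0 <= chi * b s by rewrite mulr_ge0 // ltW // (lt_trans _ hchi).
  nra.
- rewrite leNgt; apply/negP => kbig.
  have eps0 : 0 < (chi - 1) * (kappa - (b K - c K)) by nra.
  have [_ [s /itvP hsK <-] hs'] := inf_adherent eps0 hi.
  have KK : 0 <= K <= K by rewrite lexx ltW.
  have /andP[_ k2] := key s K hsK KK.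
  case/andP: (hsK) => s0 sK.
  have hb : b s <= b K by apply: bmon.
  have hc : c s <= c K by apply: cmon.
  move: k2; rewrite /f /uX /uY => k2.
  have : chi * b s <= chi * b K by rewrite ler_wpM2l // ltW // (lt_trans _ hchi).
  nra.
Qed.
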